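(* Let $n$ be a positive integer and $S\subseteq\mathbb{Z}_n$ nonempty with $0\notin S$ and $S=-S$. A subset $C$ of $\mathbb{Z}_n$ is a total perfect code in $\mathrm{Cay}(\mathbb{Z}_n,S)$ if and only if there exists $q(x)\in\mathbb{Z}[x]$ such that $$f_C(x)\, f_{S}(x) = (x^n-1)\,q(x) + (x^{n-1}+\cdots+x+1).$$
   Context: Elements of $\mathbb{Z}_n$ are identified with integers in $\{0,1,\dots,n-1\}$. For a nonempty finite set $A$ of nonnegative integers, $f_A(x)=\sum_{a\in A}x^a$. The circulant graph $\mathrm{Cay}(\mathbb{Z}_n,S)$ has vertex set $\mathbb{Z}_n$ with $u,v$ adjacent iff $v-u\in S$. A total perfect code in a graph $\Gamma=(V,E)$ is a subset $C\subseteq V$ such that every vertex of $V$ has exactly one neighbour in $C$. *)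

(* Defs.v *)
(* Z_n is represented by 'I_n (values 0..n-1), arithmetic mod n on nat. *)
From mathcomp Require Import all_boot all_order all_algebra.
Set Implicit Arguments. Unset Strict Implicit. Unset Printing Implicit Defensive.
Import GRing.Theory.
Local Open Scope ring_scope.

Definition subZn (n : nat) (u v : 'I_n) : nat := ((val v + n - val u) %% n)%N.

Definition cay_adj (n : nat) (S : {set 'I_n}) (u v : 'I_n) : bool :=
  [exists s in S, val s == subZn u v].

Definition symmetric_Zn (n : nat) (S : {set 'I_n}) : Prop :=
  forall s, s \in S -> exists2 t, t \in S & val t = ((n - val s) %% n)%N.

Definition total_perfect_code (n : nat) (S C : {set 'I_n}) : Prop :=
  forall u : 'I_n, #|[set c in C | cay_adj S u c]| = 1%N.

Definition fpoly (n : nat) (A : {set 'I_n}) : {poly int} :=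
  \sum_(a in A) 'X^(val a).

(* Main.v *)
Require Import Defs.
From mathcomp Require Import all_boot all_order all_algebra.
From mathcomp Require Import zify ring.
Import GRing.Theory Num.Theory.
Local Open Scope ring_scope.

Local Open Scope nat_scope.
Lemma mod2 n x : x < n + n -> x %% n = (if x < n then x else x - n).
Proof.
move=> h; case: ifP => hx; first by rewrite modn_small.
have h1 : n <= x by rewrite leqNgt hx.
by rewrite -{1}(subnK h1) modnDr modn_small //; lia.
Qed.
Lemma a1 n c s k : c < n -> s < n -> k < n -> ((c+s)%%n == k) = (s == (k+n-c)%%n).
Proof.
move=> hc hs hk. rewrite !mod2; try lia.
case: ifP => ?; case: ifP => ?; apply/eqP/eqP; lia.
Qed.
Lemma a2 n c k : c < n -> k < n -> (n - (k+n-c)%%n)%%n = (c+n-k)%%n.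
Proof.
move=> hc hk. rewrite (@mod2 n (k+n-c)); last lia.
case: ifP => ?; rewrite !mod2; try lia; repeat case: ifP => ?; lia.
Qed.

Local Open Scope ring_scope.

Definition gX (n m : nat) : {poly int} := 'X^(m %% n) * \sum_(i < m %/ n) ('X^n)^+i.
Lemma Xred (n m : nat) :
  'X^m = 'X^(m %% n) + ('X^n - 1) * gX n m.
Proof.
rewrite /gX.
rewrite {1}(divn_eq m n) exprD mulnC exprM.
have := subrX1 ('X^n : {poly int}) (m %/ n).
move=> /eqP; rewrite subr_eq => /eqP ->.
rewrite mulrDl mul1r addrC; congr (_ + _).
by rewrite mulrCA mulrC.
Qed.

Lemma fCS_red (n : nat) (C S : {set 'I_n}) : exists Q : {poly int},
  fpoly C * fpoly S = ('X^n - 1) * Q +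
     \sum_(c in C) \sum_(s in S) 'X^((val c + val s) %% n).
Proof.
exists (\sum_(c in C) \sum_(s in S) gX n (val c + val s)%N).
rewrite /fpoly mulr_suml mulr_sumr -big_split /=.
apply: eq_bigr => c _.
rewrite mulr_sumr mulr_sumr -big_split /=.
apply: eq_bigr => s _.
by rewrite -exprD (Xred n (val c + val s)) addrC.
Qed.

Lemma sum_poly (n : nat) (C S : {set 'I_n}) :
  \sum_(c in C) \sum_(s in S) 'X^((val c + val s) %% n) =
  \poly_(k < n) ((\sum_(c in C) \sum_(s in S) (((val c + val s) %% n)%N == k : nat))%N%:R : int).
Proof.
apply/polyP => i.
rewrite coef_poly coef_sum.
case: ifP => hi.
  rewrite natr_sum; apply: eq_bigr => c _.
  rewrite coef_sum natr_sum; apply: eq_bigr => s _.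
  by rewrite coefXn eq_sym.
apply: big1 => c _; rewrite coef_sum; apply: big1 => s _.
rewrite coefXn; case: eqP => // E.
have : (((val c + val s) %% n) < n)%N.
  by rewrite ltn_pmod //; apply: leq_ltn_trans (ltn_ord c).
by rewrite -E hi.
Qed.

Lemma countA (n : nat) (S C : {set 'I_n}) (k : 'I_n) : symmetric_Zn S ->
  (\sum_(c in C) \sum_(s in S) (((val c + val s) %% n)%N == k : nat))%N
   = #|[set c in C | cay_adj S k c]|.
Proof.
move=> hsym.
have hn : (0 < n)%N by apply: leq_ltn_trans (ltn_ord k).
have inner : forall c : 'I_n, (\sum_(s in S) (((val c + val s) %% n)%N == k : nat))%N
     = cay_adj S k c.
  move=> c.
  pose t : 'I_n := Ordinal (ltn_pmod (k + n - c) hn).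
  pose t' : 'I_n := Ordinal (ltn_pmod (c + n - k) hn).
  have ht : forall s : 'I_n, (((val c + val s) %% n)%N == k) = (s == t).
    by move=> s; rewrite a1 ?ltn_ord.
  under eq_bigr => s _ do rewrite ht.
  have -> : cay_adj S k c = (t \in S).
    have -> : cay_adj S k c = (t' \in S).
      apply/existsP/idP => [[s /andP [hs /eqP hv]]|h].
        by have -> : t' = s by apply: val_inj; rewrite /= hv.
      by exists t'; rewrite h /= /subZn.
    apply/idP/idP => h.
      have [u hu hv] := hsym _ h.
      suff -> : t = u by [].
      apply: val_inj; rewrite hv /= a2 //.
    have [u hu hv] := hsym _ h.
    suff -> : t' = u by [].
    apply: val_inj; rewrite hv /= a2 //.
  case: (boolP (t \in S)) => h.
    rewrite (bigD1 t) //= eqxx big1 // => s /andP [_ hs].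
    by rewrite (negbTE hs).
  by apply: big1 => s hs; case: eqP => // E; by rewrite -E hs in h.
under eq_bigr => c _ do rewrite inner.
rewrite -sum1_card big_mkcond /= [RHS]big_mkcond /=.
apply: eq_bigr => c _; rewrite inE.
by case: (c \in C); case: (cay_adj S k c).
Qed.

Theorem lemma2p4 (n : nat) (S C : {set 'I_n}) :
  (0 < n)%N -> S != set0 -> (forall s, s \in S -> val s <> 0%N) ->
  symmetric_Zn S ->
  (total_perfect_code S C <->
   exists q : {poly int},
     fpoly C * fpoly S = ('X^n - 1) * q + \sum_(i < n) 'X^i).
Proof.
move=> hn _ _ hsym.
have [Q hQ] := fCS_red n C S.
rewrite sum_poly in hQ.
have P1E : \sum_(i < n) 'X^i = \poly_(i < n) (1 : int).
  by rewrite poly_def; apply: eq_bigr => i _; rewrite scale1r.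
rewrite P1E.
split.
  move=> tpc; exists Q; rewrite hQ; congr (_ + _); apply: eq_poly => i hi.
  by have := countA n S C (Ordinal hi) hsym; rewrite tpc /= => ->.
move=> [q hq]; rewrite hQ in hq.
set P := \poly_(k < n) _ in hq.
set A := ('X^n - 1 : {poly int}) in hq.
have hq' : A * Q = A * q + \poly_(i < n) (1 : int) - P by rewrite -hq addrK.
have hd : A * (Q - q) = \poly_(i < n) (1 : int) - P by rewrite mulrBr hq'; ring.
have hz : Q - q = 0.
  apply/eqP; apply/negP => /negP hne.
  have hsA : size A = n.+1 by rewrite /A size_Xn_sub_1.
  have hA : A != 0 by rewrite -size_poly_eq0 hsA.
  have h1 : (size P <= n)%N by exact: size_poly.
  have h2 : (size (\poly_(i < n) (1 : int)) <= n)%N by exact: size_poly.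
  have h3 : (0 < size (Q - q)%R)%N by rewrite size_poly_gt0.
  have := size_polyD (\poly_(i < n) (1 : int)) (- P).
  rewrite -hd size_mul // hsA size_polyN => h4.
  have hm : (maxn (size (\poly_(i < n) (1 : int))) (size P) <= n)%N by rewrite geq_max h1 h2.
  have := leq_trans h4 hm.
  by rewrite addSn /= -{2}[n]addn0 leq_add2l leqn0 size_poly_eq0 (negbTE hne).
move/eqP: hz; rewrite subr_eq0 => /eqP hz.
move: hd; rewrite hz subrr mulr0 => /eqP; rewrite eq_sym subr_eq0 => /eqP hP.
move=> u.
rewrite -countA //.
have := congr1 (fun p : {poly int} => p`_u) hP.
rewrite !coef_poly ltn_ord => /eqP; rewrite eq_sym pnatr_eq1 => /eqP.
done.
Qed.
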